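(* The action of the additive group $\mathfrak h$ on $\mathfrak h$ by translation extends to the action on $\bar{\mathfrak h}$ given by $y\cdot(x_\lambda)_\lambda=(x_\lambda+\lambda(y))_\lambda$ (with $\infty+c=\infty$), and $$\bar{\mathfrak h}=\bigsqcup_{k=0}^{r}\ \bigsqcup_{\Psi\ \text{$k$-step good}}\mathring C(\Psi),$$ a disjoint union over all $k$-step good root subsystems $\Psi$ of $\Phi$, $0\le k\le r$. The sets $\mathring C(\Psi)$ are exactly the $\mathfrak h$-orbits on $\bar{\mathfrak h}$ (in particular there are finitely many, and $\mathring C(\Phi)=\mathfrak h$ is the open orbit), each $\mathring C(\Psi)$ is isomorphic to an affine space of dimension $\operatorname{rk}\Psi=r-k$, and this decomposition is an affine paving of $\bar{\mathfrak h}$.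
   Context: Let $\mathfrak g$ be a complex semisimple Lie algebra, $\mathfrak h$ a Cartan subalgebra, $r=\dim\mathfrak h$, $\Phi\subset\mathfrak h^*$ its root system, $\Phi^+$ a fixed set of positive roots, $d=|\Phi^+|$. Identify $\mathbb C$ with $\{[x_0:x_1]:x_0\ne0\}\subset\mathbb P^1$ via $c\mapsto[1:c]$, $\infty=[0:1]$; points of $(\mathbb P^1)^d$ are $x=(x_\lambda)_{\lambda\in\Phi^+}$. Identify $\mathfrak h$ with its image under $h\mapsto(\lambda(h))_{\lambda\in\Phi^+}\in\mathbb C^d\subset(\mathbb P^1)^d$; $\bar{\mathfrak h}$ is the Zariski closure of $\mathfrak h$ in $(\mathbb P^1)^d$. A root subsystem $\Psi\subseteq\Phi$ is closed if $\lambda,\mu\in\Psi$, $\lambda+\mu\in\Phi$ imply $\lambda+\mu\in\Psi$; $\operatorname{rk}\Psi=\dim\operatorname{Span}\Psi$. A good root subsystem of a root system $\Theta$ of rank $m$ is a closed root subsystem of rank $m-1$ maximal under inclusion among closed root subsystems of rank $m-1$. The $0$-step good root subsystem of $\Phi$ is $\Phi$; for $k\ge1$, a $k$-step good root subsystem is a good root subsystem of a $(k-1)$-step good root subsystem. For a closed root subsystem $\Psi$ with $\Psi^+=\Psi\cap\Phi^+$, $\mathring C(\Psi)$ is the set of $x\in(\mathbb P^1)^d$ with $x_\lambda=\infty$ for $\lambda\in\Phi^+\setminus\Psi$ and $(x_\lambda)_{\lambda\in\Psi^+}=(\lambda(h))_{\lambda\in\Psi^+}$ for some $h\in\mathfrak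 h$. *)

(* Defs.v *)
From HB Require Import structures.
From mathcomp Require Import all_boot all_order all_algebra.
From mathcomp Require Import mpoly.
Set Implicit Arguments. Unset Strict Implicit. Unset Printing Implicit Defensive.
Import Order.TTheory GRing.Theory Num.Theory.
Local Open Scope ring_scope.

(* subalgebra h is 'rV[C]_r, and h^* is identified with 'rV[C]_r via the     *)
(* pairing  pairing lam h = lam(h) = \sum_k lam_k h_k.                        *)
(* The positive roots Phi^+ are indexed by a finite type I via pos : I -> h^*;*)
(* all roots are indexed by J := bool * I, (true,i) |-> pos i and            *)
(* (false,i) |-> - pos i.  cor i in h is the coroot of pos i.                *)

Definition pairing (C : numClosedFieldType) (r : nat) (lam h : 'rV[C]_r) : C :=
  \sum_(k < r) lam 0 k * h 0 k.

Definition rootidx (I : finType) := (bool * I)%type.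

Definition root (C : numClosedFieldType) (r : nat) (I : finType)
  (pos : I -> 'rV[C]_r) (j : rootidx I) : 'rV[C]_r :=
  if j.1 then pos j.2 else - pos j.2.

(* reflection s_alpha for alpha = +- pos i (s_{-alpha} = s_alpha) *)
Definition refl (C : numClosedFieldType) (r : nat) (I : finType)
  (pos cor : I -> 'rV[C]_r) (i : I) (v : 'rV[C]_r) : 'rV[C]_r :=
  v - pairing v (cor i) *: pos i.

(* Phi = {+- pos i} is a reduced (crystallographic) root system spanning h^*,*)
(* i.e. the root system of a semisimple Lie algebra with Cartan subalgebra h.*)
Definition is_root_system (C : numClosedFieldType) (r : nat) (I : finType)
  (pos cor : I -> 'rV[C]_r) : Prop :=
  [/\ injective (root pos),
      (forall i, pos i != 0),
      (forall i, pairing (pos i) (cor i) = 2),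
      (forall i (b : rootidx I), exists c, root pos c = refl pos cor i (root pos b))
    & [/\ (forall i j, exists z : int, pairing (pos j) (cor i) = z%:~R),
      (forall (j k : rootidx I) (c : C), root pos k = c *: root pos j -> c = 1 \/ c = -1)
    & \rank (\sum_(j : rootidx I) <<root pos j>>)%MS = r]].

(* Phi^+ = {pos i} is the set of positive roots w.r.t. a base Delta = pos @ S *)
Definition is_positive_system (C : numClosedFieldType) (r : nat) (I : finType)
  (pos : I -> 'rV[C]_r) : Prop :=
  exists S : {set I},
    \rank (\sum_(s in S) <<pos s>>)%MS = #|S| /\
    forall i, exists n : I -> nat, pos i = \sum_(s in S) (n s)%:R *: pos s.

(* ---------------- (P^1)^d, with P^1 = C u {oo} = option C ---------------- *)
(* Some c = [1:c],  None = oo = [0:1].                                        *)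
Definition pt (C : numClosedFieldType) (I : finType) := I -> option C.

Definition emb (C : numClosedFieldType) (r : nat) (I : finType)
  (pos : I -> 'rV[C]_r) (h : 'rV[C]_r) : pt C I :=
  fun i => Some (pairing (pos i) h).

Definition act (C : numClosedFieldType) (r : nat) (I : finType)
  (pos : I -> 'rV[C]_r) (y : 'rV[C]_r) (x : pt C I) : pt C I :=
  fun i => omap (fun c => c + pairing (pos i) y) (x i).

(* homogeneous coordinates: variable (lshift i) is x_{i,0}, (rshift i) is x_{i,1} *)
Definition nvars (I : finType) := (#|I| + #|I|)%N.

Definition hc0 (C : numClosedFieldType) (o : option C) : C :=
  if o is Some _ then 1 else 0.
Definition hc1 (C : numClosedFieldType) (o : option C) : C :=
  if o is Some c then c else 1.

Definition homcoords (C : numClosedFieldType) (I : finType) (x : pt C I)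
  : 'I_(nvars I) -> C :=
  fun k => match split k with
           | inl a => hc0 (x (enum_val a))
           | inr a => hc1 (x (enum_val a))
           end.

Definition mhomog (C : numClosedFieldType) (I : finType) (e : I -> nat)
  (p : {mpoly C[nvars I]}) : Prop :=
  forall m, m \in msupp p -> forall i : I,
    (m (lshift #|I| (enum_rank i)) + m (rshift #|I| (enum_rank i)))%N = e i.

Definition vanish (C : numClosedFieldType) (I : finType)
  (p : {mpoly C[nvars I]}) (x : pt C I) : Prop :=
  p.@[homcoords x] = 0.

Definition zclosed (C : numClosedFieldType) (I : finType) (A : pt C I -> Prop)
  : Prop :=
  exists F : (I -> nat) -> {mpoly C[nvars I]} -> Prop,
    (forall e p, F e p -> mhomog e p) /\
    (forall x, A x <-> (forall e p, F e p -> vanish p x)).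

Definition zclosure (C : numClosedFieldType) (I : finType) (A : pt C I -> Prop)
  (x : pt C I) : Prop :=
  forall e (p : {mpoly C[nvars I]}), mhomog e p ->
    (forall y, A y -> vanish p y) -> vanish p x.

Definition hbar (C : numClosedFieldType) (r : nat) (I : finType)
  (pos : I -> 'rV[C]_r) : pt C I -> Prop :=
  zclosure (fun x => exists h, x = emb pos h).

Definition root_subsystem (C : numClosedFieldType) (r : nat) (I : finType)
  (pos cor : I -> 'rV[C]_r) (Psi : {set rootidx I}) : Prop :=
  (forall j, j \in Psi -> (~~ j.1, j.2) \in Psi) /\
  (forall a b c, a \in Psi -> b \in Psi ->
     root pos c = refl pos cor a.2 (root pos b) -> c \in Psi).

Definition closed_subsystem (C : numClosedFieldType) (r : nat) (I : finType)
  (pos cor : I -> 'rV[C]_r) (Psi : {set rootidx I}) : Prop :=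
  root_subsystem pos cor Psi /\
  (forall a b c, a \in Psi -> b \in Psi ->
     root pos a + root pos b = root pos c -> c \in Psi).

Definition rk (C : numClosedFieldType) (r : nat) (I : finType)
  (pos : I -> 'rV[C]_r) (Psi : {set rootidx I}) : nat :=
  \rank (\sum_(j in Psi) <<root pos j>>)%MS.

Definition good (C : numClosedFieldType) (r : nat) (I : finType)
  (pos cor : I -> 'rV[C]_r) (Theta Psi : {set rootidx I}) : Prop :=
  [/\ closed_subsystem pos cor Psi, Psi \subset Theta,
      (rk pos Psi).+1 = rk pos Theta &
      forall Psi', closed_subsystem pos cor Psi' -> Psi' \subset Theta ->
        (rk pos Psi').+1 = rk pos Theta -> Psi \subset Psi' -> Psi' = Psi].

Inductive kstep_good (C : numClosedFieldType) (r : nat) (I : finType)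
  (pos cor : I -> 'rV[C]_r) : nat -> {set rootidx I} -> Prop :=
| kstep0 : kstep_good pos cor 0 setT
| kstepS k Theta Psi : kstep_good pos cor k Theta -> good pos cor Theta Psi ->
    kstep_good pos cor k.+1 Psi.

Definition Cring (C : numClosedFieldType) (r : nat) (I : finType)
  (pos : I -> 'rV[C]_r) (Psi : {set rootidx I}) (x : pt C I) : Prop :=
  (forall i, (true, i) \notin Psi -> x i = None) /\
  exists h : 'rV[C]_r, forall i, (true, i) \in Psi -> x i = Some (pairing (pos i) h).

(* A is isomorphic (as a variety) to the affine space C^m: mutually inverse *)
(* polynomial maps  C^m -> A  and  A -> C^m  (the latter polynomial in the  *)
(* affine coordinates x_lam of the finite coordinates).                     *)
Definition affine_iso (C : numClosedFieldType) (I : finType) (A : pt C I -> Prop)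
  (m : nat) : Prop :=
  exists (P : I -> option {mpoly C[m]}) (Q : 'I_m -> {mpoly C[#|I|]}),
    let f := fun (v : 'I_m -> C) (i : I) => omap (fun p => p.@[v]) (P i) in
    let g := fun (x : pt C I) (j : 'I_m) =>
               (Q j).@[fun a => odflt 0 (x (enum_val a))] in
    [/\ (forall v, A (f v)),
        (forall v j, g (f v) j = v j) &
        (forall x, A x -> forall i, f (g x) i = x i)].

(* Main.v *)
Require Import Defs.
From HB Require Import structures.
From mathcomp Require Import all_boot all_order all_algebra.
From mathcomp Require Import mpoly.
From Stdlib Require Import FunctionalExtensionality.
Import Order.TTheory GRing.Theory Num.Theory.
Local Open Scope ring_scope.
Set Implicit Arguments. Unset Strict Implicit. Unset Printing Implicit Defensive.

Section Homog.
Context (C : numClosedFieldType) (I : finType).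
Local Notation P := {mpoly C[nvars I]}.
Definition Lv (i : I) : 'I_(nvars I) := lshift #|I| (enum_rank i).
Definition Rv (i : I) : 'I_(nvars I) := rshift #|I| (enum_rank i).

Lemma mhomog_ext e e' (p : P) : (forall i, e i = e' i) -> mhomog e p -> mhomog e' p.
Proof. by move=> ee h m mm i; rewrite -ee h. Qed.

Lemma mhomogD e (p q : P) : mhomog e p -> mhomog e q -> mhomog e (p + q).
Proof.
move=> hp hq m /msuppD_le; rewrite mem_cat => /orP[] hm i; [exact: hp|exact: hq].
Qed.

Lemma mhomogZ e c (p : P) : mhomog e p -> mhomog e (c *: p).
Proof. by move=> hp m /msuppZ_le; apply: hp. Qed.

Lemma mhomog0 e : mhomog e (0 : P).
Proof. by move=> m; rewrite msupp0. Qed.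

Lemma mhomog_sum (T : Type) (s : seq T) (Q : pred T) e (F : T -> P) :
  (forall t, Q t -> mhomog e (F t)) -> mhomog e (\sum_(t <- s | Q t) F t).
Proof.
move=> h; elim/big_rec: _ => [|t x Qt hx]; first exact: mhomog0.
by apply: mhomogD => //; apply: h.
Qed.

Lemma mhomogM e1 e2 (p q : P) : mhomog e1 p -> mhomog e2 q ->
  mhomog (fun i => e1 i + e2 i)%N (p * q).
Proof.
move=> hp hq m /msuppM_le /allpairsP[[m1 m2] /= [h1 h2 ->]] i.
by rewrite !mnmDE addnACA hp // hq.
Qed.

Lemma mhomog1 : mhomog (fun _ => 0%N) (1 : P).
Proof. by move=> m; rewrite msupp1 inE => /eqP -> i; rewrite !mnm0E. Qed.

Lemma mhomog_prod (T : Type) (s : seq T) (Q : pred T) (e : T -> I -> nat) (F : T -> P) :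
  (forall t, Q t -> mhomog (e t) (F t)) ->
  mhomog (fun i => \sum_(t <- s | Q t) e t i)%N (\prod_(t <- s | Q t) F t).
Proof.
move=> h; elim: s => [|t s IH].
  by rewrite big_nil; apply: mhomog_ext mhomog1 => i; rewrite big_nil.
rewrite big_cons; case: ifP => Qt.
  apply: mhomog_ext (mhomogM (h _ Qt) IH) => i; by rewrite big_cons Qt.
by apply: mhomog_ext IH => i; rewrite big_cons Qt.
Qed.

Lemma mhomogXL i : mhomog (fun j => (j == i : nat)) ('X_(Lv i) : P).
Proof.
move=> m; rewrite msuppX inE => /eqP -> j; rewrite !mnm1E /Lv.
have -> : (lshift #|I| (enum_rank i) == rshift #|I| (enum_rank j)) = false.
  by apply/negbTE; rewrite eq_lrshift.
rewrite addn0; congr nat_of_bool.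
apply/eqP/eqP => [/lshift_inj/enum_rank_inj -> //|->//].
Qed.

Lemma mhomogXR i : mhomog (fun j => (j == i : nat)) ('X_(Rv i) : P).
Proof.
move=> m; rewrite msuppX inE => /eqP -> j; rewrite !mnm1E /Rv.
have -> : (rshift #|I| (enum_rank i) == lshift #|I| (enum_rank j)) = false.
  by apply/negbTE; rewrite eq_sym eq_lrshift.
rewrite add0n; congr nat_of_bool.
apply/eqP/eqP => [/rshift_inj/enum_rank_inj -> //|->//].
Qed.

End Homog.

Section Eval.
Context (C : numClosedFieldType) (I : finType).
Local Notation P := {mpoly C[nvars I]}.

Definition idx (k : 'I_(nvars I)) : I :=
  match split k with inl a => enum_val a | inr a => enum_val a end.

Lemma splitL (a : 'I_#|I|) : split (lshift #|I| a) = inl a.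
Proof. exact: (unsplitK (inl a)). Qed.
Lemma splitR (a : 'I_#|I|) : split (rshift #|I| a) = inr a.
Proof. exact: (unsplitK (inr a)). Qed.

Lemma homcoordsL (x : pt C I) i : homcoords x (Lv i) = hc0 (x i).
Proof. by rewrite /homcoords /Lv splitL enum_rankK. Qed.
Lemma homcoordsR (x : pt C I) i : homcoords x (Rv i) = hc1 (x i).
Proof. by rewrite /homcoords /Rv splitR enum_rankK. Qed.

Lemma prod_enum (G : I -> C) : \prod_(a < #|I|) G (enum_val a) = \prod_i G i.
Proof. by rewrite -(big_enum_val (A := I)). Qed.

Lemma meval_scale e (p : P) (c : I -> C) (w : 'I_(nvars I) -> C) :
  mhomog e p ->
  p.@[fun k => c (idx k) * w k] = (\prod_i c i ^+ e i) * p.@[w].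
Proof.
move=> hp; rewrite !mevalE big_distrr /=; apply: eq_big_seq => m mm.
rewrite mulrCA; congr (_ * _).
rewrite (eq_bigr (fun k => c (idx k) ^+ m k * w k ^+ m k)); last first.
  by move=> k _; rewrite exprMn.
rewrite big_split /=; congr (_ * _).
rewrite /nvars big_split_ord /= -big_split /= -prod_enum.
apply: eq_bigr => a _; rewrite /idx splitL splitR -exprD.
by have := hp m mm (enum_val a); rewrite /Lv /Rv enum_valK => ->.
Qed.

End Eval.

Section Flat.
Context (C : numClosedFieldType) (r : nat) (I : finType) (pos cor : I -> 'rV[C]_r).
Local Notation root := (Defs.root pos).
Local Notation rk := (rk pos).

Definition span (Psi : {set rootidx I}) : 'M[C]_r := (\sum_(j in Psi) <<root j>>)%MS.
Definition flatof (S : 'M[C]_r) : {set rootidx I} := [set k | (root k <= S)%MS].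
Definition flat (Psi : {set rootidx I}) := Psi = flatof (span Psi).

Lemma rkE (Psi : {set rootidx I}) : rk Psi = \rank (span Psi). Proof. by []. Qed.

Lemma sub_span (Psi : {set rootidx I}) j : j \in Psi -> (root j <= span Psi)%MS.
Proof. by move=> jP; apply: (sumsmx_sup j) => //; rewrite genmxE. Qed.

Lemma span_sub (Psi : {set rootidx I}) m (S : 'M_(m, r)) : (forall j, j \in Psi -> (root j <= S)%MS) -> (span Psi <= S)%MS.
Proof. by move=> h; apply/sumsmx_subP => j jP; rewrite genmxE; apply: h. Qed.

Lemma span_mono (Psi Psi' : {set rootidx I}) : Psi \subset Psi' -> (span Psi <= span Psi')%MS.
Proof. by move=> /subsetP h; apply: span_sub => j /h; apply: sub_span. Qed.

Lemma root_flip j : root (~~ j.1, j.2) = - root j.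
Proof. by case: j => [[] i]; rewrite /Defs.root /= ?opprK. Qed.

Lemma pos_root_sub {m} (S : 'M_(m, r)) j : (pos j.2 <= S)%MS = (root j <= S)%MS.
Proof. by case: j => [[] i]; rewrite /Defs.root //= (eqmx_opp (pos i)). Qed.

Lemma flatof_closed S : closed_subsystem pos cor (flatof S).
Proof.
split; first split.
- by move=> j; rewrite !inE root_flip (eqmx_opp (root j)).
- move=> a b c; rewrite !inE => ha hb ->; rewrite /refl.
  apply: addmx_sub => //; rewrite (eqmx_opp (_ *: _)); apply: scalemx_sub.
  by rewrite pos_root_sub.
- by move=> a b c; rewrite !inE => ha hb <-; apply: addmx_sub.
Qed.

Lemma flat_closed (Psi : {set rootidx I}) : flat Psi -> closed_subsystem pos cor Psi.
Proof. by move=> ->; apply: flatof_closed. Qed.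

Lemma span_flatof S : (span (flatof S) <= S)%MS.
Proof. by apply: span_sub => j; rewrite inE. Qed.

Lemma flat_sym (Psi : {set rootidx I}) j : flat Psi -> (j \in Psi) = ((~~ j.1, j.2) \in Psi).
Proof. by move=> ->; rewrite !inE root_flip (eqmx_opp (root j)). Qed.

Lemma flat_eq (Psi Psi' : {set rootidx I}) : flat Psi -> flat Psi' -> Psi \subset Psi' -> rk Psi = rk Psi' -> Psi = Psi'.
Proof.
move=> fP fP' sub hrk; apply/eqP; rewrite eqEsubset sub /=.
have s1 := span_mono sub.
have s2 : (span Psi' <= span Psi)%MS by rewrite -(mxrank_leqif_sup s1) -!rkE hrk.
by apply/subsetP => k kP; rewrite fP inE (submx_trans _ s2) // sub_span.
Qed.

Lemma flat_good (Theta Psi : {set rootidx I}) : flat Theta -> good pos cor Theta Psi -> flat Psi.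
Proof.
move=> fT [cP sPT hrk max].
set Psi'' := flatof (span Psi).
have sub1 : Psi \subset Psi'' by apply/subsetP => j jP; rewrite inE sub_span.
have sp : (span Psi'' :=: span Psi)%MS.
  by apply/eqmxP; rewrite span_flatof span_mono.
rewrite /flat -/Psi''; symmetry; apply: max => //.
- exact: flatof_closed.
- apply/subsetP => k; rewrite inE => hk; rewrite fT inE.
  by rewrite (submx_trans hk) // span_mono.
- by rewrite rkE sp.
Qed.

Hypothesis Hrank : \rank (\sum_(j : rootidx I) <<root j>>)%MS = r.

Lemma span_setT : span setT = (\sum_(j : rootidx I) <<root j>>)%MS.
Proof. by rewrite /span; apply: eq_bigl => j; rewrite inE. Qed.

Lemma flat_setT : flat setT.
Proof.
apply/esym/eqP; rewrite eqEsubset subsetT /=; apply/subsetP => j _; rewrite inE.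
by apply: submx_full; rewrite /row_full span_setT Hrank.
Qed.

Lemma kstep_flat k (Psi : {set rootidx I}) : kstep_good pos cor k Psi -> flat Psi /\ (rk Psi + k)%N = r.
Proof.
elim=> [|k' Theta Psi' _ [fT hT] g]; first by rewrite addn0 rkE span_setT Hrank; split=> //; exact: flat_setT.
split; first exact: flat_good fT g.
by case: g => _ _ e _; rewrite addnS -addSn e.
Qed.

Lemma rk_le (Psi : {set rootidx I}) : (rk Psi <= r)%N.
Proof. exact: rank_leq_col. Qed.

Lemma flat_kstep (Psi : {set rootidx I}) : flat Psi -> kstep_good pos cor (r - rk Psi) Psi.
Proof.
move=> fP; have [n] := ubnP (r - rk Psi); elim: n Psi fP => // n IH Psi fP hn.
have [hr|hr] := eqVneq (rk Psi) r.
  have {}hr : (rk Psi = r)%N := hr.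
  have -> : Psi = setT.
    apply: (flat_eq fP flat_setT (subsetT _)).
    by rewrite [rk setT]rkE span_setT Hrank.
  by rewrite rkE span_setT Hrank subnn; constructor.
have [j jP] : exists j, j \notin Psi.
  apply/existsP; rewrite -negb_forall; apply/negP => /forallP hall.
  move: hr; rewrite rkE; have -> : span Psi = span setT.
    by congr span; apply/setP => j; rewrite inE hall.
  by rewrite span_setT Hrank eqxx.
set S' := (span Psi + root j)%MS.
set Theta := flatof S'.
have jnot : ~~ (root j <= span Psi)%MS by rewrite fP inE in jP.
have spT : (span Theta :=: S')%MS.
  apply/eqmxP; rewrite span_flatof /= addsmx_sub; apply/andP; split.
    apply: span_sub => k kP; apply: sub_span; rewrite inE.
    by apply: submx_trans (sub_span kP) (addsmxSl _ _).
  by apply: sub_span; rewrite inE addsmxSr.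
have fT : flat Theta by rewrite /flat /Theta; apply/setP => k; rewrite !inE spT.
have rT : rk Theta = (rk Psi).+1.
  rewrite rkE spT; apply/eqP; rewrite eqn_leq; apply/andP; split.
    have := mxrank_adds_leqif (span Psi) (root j); rewrite -/S' => [[h _]].
    by rewrite (leq_trans h) // -rkE -[(rk Psi).+1]addn1 leq_add2l rank_leq_row.
  rewrite rkE; apply: rank_ltmx; rewrite ltmxE addsmxSl /=.
  by apply/negP => h; move/negP: jnot; apply; apply: submx_trans (addsmxSr _ _) h.
have sPT : Psi \subset Theta.
  apply/subsetP => k kP; rewrite inE; apply: submx_trans (sub_span kP) (addsmxSl _ _).
have hlt : (r - rk Theta < n)%N.
  rewrite rT; move: hn (rk_le Psi); rewrite ltnS => hn hle.
  apply: leq_trans hn; rewrite subnS prednK // subn_gt0 ltn_neqAle hr hle.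
  done.
have := IH _ fT hlt => kT.
have -> : (r - rk Psi = (r - rk Theta).+1)%N.
  rewrite rT subnS prednK // subn_gt0 ltn_neqAle hr rk_le //.
apply: kstepS kT _; split => //; first exact: flat_closed.
move=> Psi' cP' sP' hr' sub.
have s2 : (span Psi' <= span Psi)%MS.
  by rewrite -(mxrank_leqif_sup (span_mono sub)) -!rkE -eqSS hr' rT.
apply/eqP; rewrite eqEsubset sub andbT; apply/subsetP => k kP.
by rewrite fP inE (submx_trans (sub_span kP) s2).
Qed.
End Flat.

Section Polys.
Context (C : numClosedFieldType).

Definition pev n (V : 'I_n -> {poly C}) (p : {mpoly C[n]}) : {poly C} :=
  \sum_(m <- msupp p) (p@_m)%:P * \prod_i V i ^+ m i.

Lemma pevE n (V : 'I_n -> {poly C}) p s : (pev V p).[s] = p.@[fun k => (V k).[s]].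
Proof.
rewrite /pev mevalE horner_sum; apply: eq_bigr => m _.
by rewrite hornerM hornerC horner_prod; congr (_ * _); apply: eq_bigr => i _; rewrite horner_exp.
Qed.

Lemma poly_inf (q : {poly C}) : (forall k : nat, q.[k.+1%:R] = 0) -> q = 0.
Proof.
move=> h; apply: (@roots_geq_poly_eq0 _ _ [seq k.+1%:R | k <- iota 0 (size q)]).
- by apply/allP => x /mapP[k _ ->]; apply/eqP/h.
- rewrite map_inj_uniq ?iota_uniq // => a b /eqP; rewrite eqr_nat => /eqP; case.
  done.
- by rewrite size_map size_iota.
Qed.

Lemma poly_ex (q : {poly C}) : q != 0 -> exists s : C, s != 0 /\ q.[s] != 0.
Proof.
move=> nq; case: (boolP [exists k : 'I_(size q), q.[k.+1%:R] != 0]).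
  by case/existsP => k hk; exists k.+1%:R; rewrite pnatr_eq0.
rewrite negb_exists => /forallP hall; case/eqP: nq.
apply: (@roots_geq_poly_eq0 _ _ [seq k.+1%:R | k <- iota 0 (size q)]).
- apply/allP => x /mapP[k]; rewrite mem_iota add0n => /andP[_ hk] ->.
  by have := hall (Ordinal hk); rewrite negbK.
- rewrite map_inj_uniq ?iota_uniq // => a b /eqP; rewrite eqr_nat => /eqP; case.
  done.
- by rewrite size_map size_iota.
Qed.

Context (r : nat).

Lemma pairing_sumr (T : finType) (l : 'rV[C]_r) (c : T -> C) (w : T -> 'rV[C]_r) :
  pairing l (\sum_a c a *: w a) = \sum_a c a * pairing l (w a).
Proof.
rewrite /pairing (eq_bigr (fun k => \sum_a l 0 k * (c a * w a 0 k))); last first.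
  by move=> k _; rewrite summxE mulr_sumr; apply: eq_bigr => a _; rewrite mxE.
rewrite exchange_big; apply: eq_bigr => a _; rewrite mulr_sumr.
by apply: eq_bigr => k _; rewrite mulrCA.
Qed.

Lemma pairing_suml (T : Type) (s : seq T) (Q : pred T) (F : T -> 'rV[C]_r) h :
  pairing (\sum_(t <- s | Q t) F t) h = \sum_(t <- s | Q t) pairing (F t) h.
Proof.
rewrite /pairing (eq_bigr (fun k => \sum_(t <- s | Q t) F t 0 k * h 0 k)); last first.
  by move=> k _; rewrite summxE mulr_suml.
by rewrite exchange_big.
Qed.

Lemma pairingZl (l h : 'rV[C]_r) c : pairing (c *: l) h = c * pairing l h.
Proof. by rewrite /pairing mulr_sumr; apply: eq_bigr => k _; rewrite mxE mulrA. Qed.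

Lemma pairingNl (l h : 'rV[C]_r) : pairing (- l) h = - pairing l h.
Proof. by rewrite -scaleN1r pairingZl mulN1r. Qed.

Lemma pairingDr (l h h' : 'rV[C]_r) : pairing l (h + h') = pairing l h + pairing l h'.
Proof. by rewrite /pairing -big_split; apply: eq_bigr => k _; rewrite mxE mulrDr. Qed.

Lemma pairingBr (l h h' : 'rV[C]_r) : pairing l (h - h') = pairing l h - pairing l h'.
Proof.
rewrite /pairing -sumrB; apply: eq_bigr => k _; rewrite !mxE mulrDr mulrN //.
Qed.

Lemma pairing0r (l : 'rV[C]_r) : pairing l 0 = 0.
Proof. by rewrite /pairing big1 // => k _; rewrite mxE mulr0. Qed.

Lemma generic (I : finType) (B : pred I) (phi : I -> 'rV[C]_r) (w : I -> 'rV[C]_r) :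
  (forall b, B b -> pairing (phi b) (w b) != 0) ->
  exists t : C, forall b, B b ->
     pairing (phi b) (\sum_a (t ^+ enum_rank a) *: w a) != 0.
Proof.
move=> hw.
pose q b : {poly C} := \sum_a (pairing (phi b) (w a))%:P * 'X^(enum_rank a).
have qE b t : (q b).[t] = pairing (phi b) (\sum_a (t ^+ enum_rank a) *: w a).
  rewrite pairing_sumr horner_sum; apply: eq_bigr => a _.
  by rewrite hornerM hornerC hornerXn mulrC.
have qn b : B b -> q b != 0.
  move=> Bb; apply/eqP => hq; move: (congr1 (fun p : {poly C} => p`_(enum_rank b)) hq) => /=.
  rewrite coef0 coef_sum (bigD1 b) //= coefCM coefXn eqxx mulr1 big1 ?addr0.
    by move/eqP; rewrite (negbTE (hw _ Bb)).
  move=> a nab; rewrite coefCM coefXn.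
  have -> : (val (enum_rank b) == val (enum_rank a)) = false.
    by apply/negbTE; rewrite (inj_eq val_inj) (inj_eq enum_rank_inj) eq_sym.
  by rewrite mulr0.
have [t [_ ht]] := poly_ex (introT (prodf_neq0 B q) qn).
exists t => b Bb; rewrite -qE; move: ht; rewrite horner_prod => /prodf_neq0; apply.
done.
Qed.

End Polys.

Section Closure1.
Context (C : numClosedFieldType) (r : nat) (I : finType) (pos : I -> 'rV[C]_r).
Local Notation root := (Defs.root pos).

Lemma pairingZr (l h : 'rV[C]_r) c : pairing l (c *: h) = c * pairing l h.
Proof. by rewrite /pairing mulr_sumr; apply: eq_bigr => k _; rewrite mxE mulrCA. Qed.

Lemma pairing_col (l : 'rV[C]_r) (K : 'M[C]_r) k :
  pairing l (\row_j K j k) = (l *m K) 0 k.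
Proof. by rewrite /pairing mxE; apply: eq_bigr => j _; rewrite mxE. Qed.

Lemma cell_in_hbar (Psi : {set rootidx I}) (x : pt C I) :
  flat pos Psi -> Cring pos Psi x -> hbar pos x.
Proof.
move=> fP [xN [h0 xS]] e p hp van.
set S := span pos Psi; set K := cokermx S.
pose w b : 'rV[C]_r := if [pick k | (pos b *m K) 0 k != 0] is Some k then \row_j K j k else 0.
have inS i : (true, i) \in Psi -> (pos i <= S)%MS.
  by move=> iP; rewrite (pos_root_sub _ _ (true, i)) sub_span.
have w0 i a : (true, i) \in Psi -> pairing (pos i) (w a) = 0.
  move=> /inS; rewrite submxE => /eqP hz; rewrite /w; case: pickP => [k _|_].
    by rewrite pairing_col hz mxE.
  exact: pairing0r.
have w1 b : (true, b) \notin Psi -> pairing (pos b) (w b) != 0.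
  move=> bP; rewrite /w; case: pickP => [k hk|hn]; first by rewrite pairing_col.
  exfalso; move: bP; rewrite fP inE -(pos_root_sub _ _ (true, b)) /= submxE.
  move=> /eqP; apply; apply/matrixP => i k; rewrite ord1 [RHS]mxE.
  have := hn k; rewrite /= => /negbFE/eqP; exact.
have [t ht] := generic (B := fun b => (true, b) \notin Psi) w1.
set v := \sum_a t ^+ enum_rank a *: w a.
have v0 i : (true, i) \in Psi -> pairing (pos i) v = 0.
  by move=> iP; rewrite pairing_sumr big1 // => a _; rewrite w0 ?mulr0.
pose V (k : 'I_(nvars I)) : {poly C} :=
  match split k with
  | inl a => if (true, enum_val a) \in Psi then 1 else 'X
  | inr a => if (true, enum_val a) \in Psi then (pairing (pos (enum_val a)) h0)%:P
             else (pairing (pos (enum_val a)) h0)%:P * 'X + (pairing (pos (enum_val a)) v)%:P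
  end.
have qz : pev V p = 0.
  apply: poly_inf => n; rewrite pevE.
  set s : C := n.+1%:R.
  have s0 : s != 0 by rewrite pnatr_eq0.
  pose c i : C := if (true, i) \in Psi then 1 else s.
  rewrite (meval_eq (v2 := fun k => c (idx k) * homcoords (emb pos (h0 + s^-1 *: v)) k)).
    by rewrite (meval_scale _ _ hp) van ?mulr0 //; exists (h0 + s^-1 *: v).
  move=> k; rewrite /V /c /idx /homcoords; case: (split k) => a /=;
    case: ifP => ha /=; rewrite ?hornerE ?mul1r ?mulr1 //.
  - by rewrite pairingDr pairingZr v0 // mulr0 addr0.
  - rewrite pairingDr pairingZr mulrDr mulrA divff // mul1r.
    by rewrite mulrC.
pose c' i : C := if (true, i) \in Psi then 1 else pairing (pos i) v.
have := congr1 (fun q => q.[0]) qz; rewrite /= pevE horner0.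
rewrite (meval_eq (v2 := fun k => c' (idx k) * homcoords x k)).
  rewrite (meval_scale _ _ hp) => /eqP; rewrite mulf_eq0 => /orP[|/eqP //].
  rewrite prodf_seq_eq0 => /hasP[i _ /=]; rewrite expf_eq0 /c' => /andP[_].
  by case: ifP => hi; [rewrite oner_eq0| move=> /eqP hz; move: (ht i); rewrite hi hz eqxx => /(_ isT)].
move=> k; rewrite /V /c' /idx /homcoords; case: (split k) => a /=;
  case: ifP => ha /=; rewrite ?hornerE ?mul1r ?mulr1 //.
- by rewrite xS.
- by rewrite xN ?ha //= mulr0.
- by rewrite xS.
- by rewrite xN ?ha //= mulr1.
Qed.

End Closure1.

Section Closure2.
Context (C : numClosedFieldType) (r : nat) (I : finType) (pos : I -> 'rV[C]_r).
Local Notation root := (Defs.root pos).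

Definition relpoly (F : {set I}) (c : I -> C) : {mpoly C[nvars I]} :=
  \sum_(i in F) c i *: ('X_(Rv i) * \prod_(j in F | j != i) 'X_(Lv j)).

Lemma sum_ind (F : {set I}) i k : i \in F ->
  ((k == i) + \sum_(j in F | j != i) (k == j))%N = (k \in F).
Proof.
move=> iF; have [->|nki] := eqVneq k i.
  by rewrite iF big1 // => j /andP[_ /negbTE]; rewrite eq_sym => ->.
rewrite add0n; case: (boolP (k \in F)) => kF.
  rewrite (bigD1 k) /= ?kF ?nki // eqxx big1 // => j /andP[/andP[_ _] /negbTE].
  by rewrite eq_sym => ->.
by rewrite big1 // => j /andP[jF _]; case: eqP => // e; rewrite e jF in kF.
Qed.

Lemma relpoly_homog (F : {set I}) c : mhomog (fun k => (k \in F : nat)) (relpoly F c).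
Proof.
apply: mhomog_sum => i iF; apply: mhomogZ.
have h1 := @mhomogXR C I i.
have h2 := @mhomog_prod C I I (index_enum I) (fun j => (j \in F) && (j != i)) _ _ (fun j _ => @mhomogXL C I j).
apply: (mhomog_ext _ (mhomogM h1 h2)) => k.
by rewrite /= sum_ind.
Qed.

Lemma relpoly_eval (F : {set I}) c (x : pt C I) : (relpoly F c).@[homcoords x] =
  \sum_(i in F) c i * (hc1 (x i) * \prod_(j in F | j != i) hc0 (x j)).
Proof.
rewrite /relpoly; elim/big_rec2: _ => [|i y p _ <-]; first by rewrite meval0.
rewrite mevalD mevalZ mevalM mevalXU homcoordsR; congr (_ * (_ * _) + _).
elim/big_rec2: _ => [|j z q _ <-]; first by rewrite meval1.
by rewrite mevalM mevalXU homcoordsL.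
Qed.

Lemma pairing0l (h : 'rV[C]_r) : pairing 0 h = 0.
Proof. by rewrite -(scale0r 0) pairingZl mul0r. Qed.

Lemma hbar_rel (x : pt C I) (F : {set I}) c : hbar pos x -> \sum_(i in F) c i *: pos i = 0 ->
  \sum_(i in F) c i * (hc1 (x i) * \prod_(j in F | j != i) hc0 (x j)) = 0.
Proof.
move=> hx hc; rewrite -relpoly_eval; apply: (hx _ _ (relpoly_homog (F:=F) (c:=c))) => y [h ->].
rewrite /vanish relpoly_eval.
rewrite (eq_bigr (fun i => c i * pairing (pos i) h)); last first.
  by move=> i _; rewrite /= big1 ?mulr1 //.
transitivity (pairing (\sum_(i in F) c i *: pos i) h); last by rewrite hc pairing0l.
by rewrite pairing_suml; apply: eq_bigr => i _; rewrite pairingZl.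
Qed.

Lemma sum_pair (G : rootidx I -> 'rV[C]_r) : \sum_j G j = \sum_i (G (true, i) + G (false, i)).
Proof.
rewrite (eq_bigr (fun p => G (p.1, p.2))); last by case.
by rewrite -(pair_bigA _ (fun b i => G (b, i))) /= big_bool /= big_split.
Qed.

Lemma span_coef (Psi : {set rootidx I}) (v : 'rV[C]_r) : (v <= span pos Psi)%MS ->
  exists d : I -> C, v = \sum_i d i *: pos i /\
    forall i, d i != 0 -> ((true, i) \in Psi) || ((false, i) \in Psi).
Proof.
move=> /sub_sumsmxP [u hu].
have ex j : exists c : C, u j *m <<root j>>%MS == c *: root j.
  have : (u j *m <<root j>> <= root j)%MS by rewrite -(genmxE (root j)) submxMl.
  by case/submxP => D ->; exists (D 0 0); rewrite {1}[D]mx11_scalar mul_scalar_mx.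
pose c j := xchoose (ex j).
have hc j : u j *m <<root j>>%MS = c j *: root j by apply/eqP/(xchooseP (ex j)).
exists (fun i => (if (true, i) \in Psi then c (true, i) else 0) -
                 (if (false, i) \in Psi then c (false, i) else 0)); split.
  rewrite hu (eq_bigr (fun j => c j *: root j)) ?big_mkcond ?sum_pair; last by move=> j _; exact: hc.
  apply: eq_bigr => i _; rewrite /Defs.root /= scalerBl.
  by case: ifP; case: ifP; rewrite ?scale0r ?scalerN ?subr0 ?sub0r ?add0r ?addr0.
move=> i; case: ifP => // _; case: ifP => //; rewrite subrr eqxx //.
Qed.

Definition psix (x : pt C I) : {set rootidx I} := [set j | x j.2 != None].
Definition finx (x : pt C I) : {set I} := [set i | x i != None].

Lemma hbar_flat x : hbar pos x -> flat pos (psix x).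
Proof.
move=> hx; apply/setP => j; apply/idP/idP => [jP|]; first by rewrite inE sub_span.
rewrite inE => hj; rewrite inE; apply/negP => /eqP xj.
have := hj; rewrite -(pos_root_sub _ _ j) => /span_coef [d [hd dnz]].
set l := j.2 in xj hd.
have dF i : d i != 0 -> x i != None.
  by move/dnz; rewrite !inE orbb.
pose F := l |: finx x.
have lF : l \notin finx x by rewrite inE xj eqxx.
pose c i := if i == l then -1 else d i.
have dz i : i \notin finx x -> d i = 0.
  by rewrite inE negbK => /eqP xi; apply/eqP; apply: contraT => /dF; rewrite xi.
have hc : \sum_(i in F) c i *: pos i = 0.
  rewrite (bigD1 l) ?setU11 //= /c eqxx scaleN1r.
  rewrite (eq_bigr (fun i => d i *: pos i)); last by move=> i /andP[_ /negbTE ->].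
  have -> : \sum_(i in F | i != l) d i *: pos i = \sum_(i in finx x) d i *: pos i.
    apply: eq_bigl => i; rewrite !inE; case: (eqVneq i l) => [->|] /=.
      by rewrite -(negbTE lF) inE.
    by rewrite andbT.
  rewrite hd [X in - X + _](bigID (fun i => i \in finx x)) /= [X in - (_ + X)]big1 ?addr0 ?addNr //.
  by move=> i /dz ->; rewrite scale0r.
have := hbar_rel hx hc.
rewrite (bigD1 l) ?setU11 //= [X in _ + X]big1; last first.
  move=> i /andP[iF il]; rewrite (bigD1 l) /=; last by rewrite setU11 eq_sym.
  by rewrite xj /= mul0r !mulr0.
rewrite addr0 /c eqxx xj /= mul1r big1 ?mulr1.
  by move/eqP; rewrite oppr_eq0 oner_eq0.
move=> i /andP[]; rewrite !inE => /orP[/eqP ->|]; first by rewrite eqxx.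
by case: (x i).
Qed.

End Closure2.

Section Closure3.
Context (C : numClosedFieldType) (r : nat) (I : finType) (pos : I -> 'rV[C]_r).

Lemma sum_enum (V : nmodType) (G : I -> V) : \sum_(a < #|I|) G (enum_val a) = \sum_i G i.
Proof. by rewrite -(big_enum_val (A := I)). Qed.

Definition hv (o : option C) : C := if o is Some c then c else 0.

Lemma hbar_cring (x : pt C I) : hbar pos x -> Cring pos (psix x) x.
Proof.
move=> hx; split=> [i|]; first by rewrite inE /= negbK => /eqP.
pose M : 'M[C]_(#|I|, r) := \matrix_(a, k) (if x (enum_val a) is Some _ then pos (enum_val a) 0 k else 0).
pose xv : 'rV[C]_#|I| := \row_a hv (x (enum_val a)).
set K := cokermx M^T.
have hK : (xv <= M^T)%MS.
  rewrite submxE; apply/eqP/matrixP => i k; rewrite ord1 !mxE.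
  have hc : \sum_(i in finx x) K (enum_rank i) k *: pos i = 0.
    apply/rowP => l; rewrite [RHS]mxE summxE.
    transitivity ((M^T *m K) l k); last by rewrite mulmx_coker mxE.
    rewrite mxE big_mkcond -sum_enum /=; apply: eq_bigr => a _.
    rewrite !mxE inE enum_valK; case: (x (enum_val a)) => [y|] /=.
      by rewrite mulrC.
    by rewrite mul0r.
  transitivity (\sum_(i in finx x) K (enum_rank i) k * (hc1 (x i) * \prod_(j in finx x | j != i) hc0 (x j))); last exact: hbar_rel hx hc.
  rewrite [RHS]big_mkcond -[RHS]sum_enum /=.
  apply: eq_bigr => a _; rewrite [xv _ _]mxE inE enum_valK.
  case: (x (enum_val a)) => [y|] /=; last by rewrite mul0r.
  rewrite big1 => [|j]; first by rewrite mulr1 mulrC.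
  by move=> /andP[]; rewrite inE; case: (x j).
have [D hD] := submxP hK.
exists D => i; rewrite inE /=; case E: (x i) => [y|] // _.
have := congr1 (fun A : 'rV[C]_#|I| => A 0 (enum_rank i)) hD; rewrite /= !mxE enum_rankK E /= => ->.
rewrite /pairing; congr Some; apply: eq_bigr => k _; rewrite !mxE enum_rankK E; exact: mulrC.
Qed.

End Closure3.

Section Affine.
Context (C : numClosedFieldType) (r : nat) (I : finType) (pos : I -> 'rV[C]_r).

Lemma pairing_mx (l h : 'rV[C]_r) : pairing l h = (l *m h^T) 0 0.
Proof. by rewrite /pairing mxE; apply: eq_bigr => k _; rewrite mxE. Qed.

Lemma meval_lin n (a : 'I_n -> C) (v : 'I_n -> C) :
  (\sum_k a k *: ('X_k : {mpoly C[n]})).@[v] = \sum_k a k * v k.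
Proof.
elim/big_rec2: _ => [|k y p _ <-]; first by rewrite meval0.
by rewrite mevalD mevalZ mevalXU.
Qed.

Lemma affine_flat (Psi : {set rootidx I}) : flat pos Psi ->
  affine_iso (Cring pos Psi) (rk pos Psi).
Proof.
move=> fP.
pose M : 'M[C]_(#|I|, r) := \matrix_(a, k) (if (true, enum_val a) \in Psi then pos (enum_val a) 0 k else 0).
have rowM a : row a M = if (true, enum_val a) \in Psi then pos (enum_val a) else 0.
  by apply/rowP => k; rewrite !mxE; case: ifP; rewrite ?mxE.
have eqM : (M :=: span pos Psi)%MS.
  apply/eqmxP/andP; split.
    apply/row_subP => a; rewrite rowM; case: ifP => h; last exact: sub0mx.
    by rewrite (pos_root_sub _ _ (true, enum_val a)) sub_span.
  apply: span_sub => j jP; rewrite -pos_root_sub.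
  have jT : (true, j.2) \in Psi.
    by case: j jP => [[] i] //= jP; rewrite (flat_sym (true, i) fP).
  by have := row_sub (enum_rank j.2) M; rewrite rowM enum_rankK jT.
have -> : rk pos Psi = \rank M by rewrite rkE eqM.
set m := \rank M.
set f := maxrankfun M.
set B := rowsub f M.
have freeB : row_free B := maxrowsub_free M.
have fullBt : row_full B^T by rewrite /row_full mxrank_tr; exact: freeB.
have [X hX] := row_fullP fullBt.
have BX : B *m X^T = 1%:M by rewrite -[B]trmxK -trmx_mul hX trmx1.
have rowB j : row j B = row (f j) M by apply/rowP => k; rewrite !mxE.
have inP j : (true, enum_val (f j)) \in Psi.
  apply: contraT => hn.
  have : row j (B *m X^T) = 0 by rewrite row_mul rowB rowM (negbTE hn) mul0mx.
  rewrite BX => /rowP /(_ j); rewrite !mxE eqxx /= => /eqP; rewrite oner_eq0.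
  done.
have rowB' j : row j B = pos (enum_val (f j)) by rewrite rowB rowM inP.
pose a (i : I) : 'rV[C]_m := pos i *m pinvmx B.
have aB i : (true, i) \in Psi -> a i *m B = pos i.
  move=> iP; apply: mulmxKpV; rewrite /B /f (eq_maxrowsub M) eqM.
  by rewrite (pos_root_sub _ _ (true, i)) sub_span.
exists (fun i => if (true, i) \in Psi then Some (\sum_k a i 0 k *: 'X_k) else None).
exists (fun j => 'X_(f j)).
have key (v : 'I_m -> C) i : (true, i) \in Psi ->
  \sum_k a i 0 k * v k = pairing (pos i) ((\row_k v k) *m X).
  move=> iP; rewrite pairing_mx -(aB _ iP) trmx_mul mulmxA -(mulmxA (a i) B) BX mulmx1.
  by rewrite mxE; apply: eq_bigr => k _; rewrite !mxE.
split.
- move=> v; split => [i hi|]; first by rewrite /= (negbTE hi).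
  by exists ((\row_k v k) *m X) => i iP /=; rewrite iP /= meval_lin key.
- move=> v j /=; rewrite mevalXU /= inP /= meval_lin key //.
  by rewrite pairing_mx -rowB' trmx_mul mulmxA -row_mul BX -row_mul mul1mx !mxE.
- move=> x [xN [h0 xS]] i /=; case: ifP => iP; last by rewrite xN ?iP.
  rewrite xS // /= meval_lin; congr Some.
  transitivity (\sum_k a i 0 k * pairing (pos (enum_val (f k))) h0).
    by apply: eq_bigr => k _; rewrite mevalXU xS.
  rewrite pairing_mx -(aB _ iP) -mulmxA mxE; apply: eq_bigr => k _; congr (_ * _).
  by rewrite pairing_mx -rowB' -row_mul mxE.
Qed.

End Affine.

Lemma sorted_cat_rel (T : eqType) (le : rel T) (s1 s2 : seq T) :
  transitive le -> sorted le (s1 ++ s2) -> forall a b, a \in s1 -> b \in s2 -> le a b.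
Proof.
move=> tr; elim: s1 => // a s1 IH /= hs x y; rewrite inE => /orP[/eqP ->|xs] ys.
  by move: hs; rewrite (path_sortedE tr) => /andP[/allP h _]; apply: h; rewrite mem_cat ys orbT.
by apply: IH => //; apply: path_sorted hs.
Qed.

Section Paving.
Context (C : numClosedFieldType) (r : nat) (I : finType) (pos cor : I -> 'rV[C]_r).
Hypothesis Hrank : \rank (\sum_(j : rootidx I) <<Defs.root pos j>>)%MS = r.

Lemma cring_psix (Psi : {set rootidx I}) x : flat pos Psi -> Cring pos Psi x -> Psi = psix x.
Proof.
move=> fP [xN [h xS]]; apply/setP => j; rewrite inE.
case: j => b i /=; have -> : ((b, i) \in Psi) = ((true, i) \in Psi).
  by case: b => //; rewrite (flat_sym (true, i) fP).
by case: (boolP ((true, i) \in Psi)) => iP; [rewrite xS | rewrite xN].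
Qed.

Definition flatb (Psi : {set rootidx I}) := Psi == flatof pos (span pos Psi).

Lemma flatbP (Psi : {set rootidx I}) : reflect (flat pos Psi) (flatb Psi).
Proof. exact: eqP. Qed.

Lemma kstep_flatE (Psi : {set rootidx I}) : (exists k, kstep_good pos cor k Psi) <-> flat pos Psi.
Proof.
split; first by case=> k /(kstep_flat Hrank) [].
by move=> fP; exists (r - rk pos Psi)%N; apply: flat_kstep.
Qed.

Definition prodL (G : {set rootidx I}) : {mpoly C[nvars I]} :=
  \prod_(i | (true, i) \in G) 'X_(Lv i).

Lemma prodL_homog (G : {set rootidx I}) : mhomog (fun k => ((true, k) \in G : nat)) (prodL G).
Proof.
have h2 := @mhomog_prod C I I (index_enum I) (fun i => (true, i) \in G) _ _ (fun j _ => @mhomogXL C I j).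
apply: (mhomog_ext _ h2) => k; rewrite big_mkcond /= (bigD1 k) //= eqxx big1 ?addn0.
  by case: ifP.
by move=> j /negbTE; rewrite eq_sym => ->; case: ifP.
Qed.

Lemma prodL_eval (G : {set rootidx I}) (x : pt C I) : (prodL G).@[homcoords x] = \prod_(i | (true, i) \in G) hc0 (x i).
Proof.
rewrite /prodL; elim/big_rec2: _ => [|j z q _ <-]; first by rewrite meval1.
by rewrite mevalM mevalXU homcoordsL.
Qed.

Lemma paving : exists s : seq {set rootidx I},
  [/\ uniq s, (forall Psi, Psi \in s <-> exists k, kstep_good pos cor k Psi) &
      forall n, zclosed (fun x => exists Psi, Psi \in take n s /\ Cring pos Psi x)].
Proof.
pose le := fun A B : {set rootidx I} => (rk pos A <= rk pos B)%N.
have tr : transitive le by move=> A B D; apply: leq_trans.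
have to : total le by move=> A B; apply: leq_total.
set s := sort le (enum [pred P : {set rootidx I} | flatb P]).
have us : uniq s by rewrite sort_uniq enum_uniq.
have ms Psi : Psi \in s = flatb Psi by rewrite mem_sort mem_enum.
exists s; split => //.
  by move=> Psi; rewrite kstep_flatE ms; split => [/flatbP|/flatbP].
move=> n.
pose Fam e p := (mhomog e p /\ (forall y, (exists h, y = emb pos h) -> vanish p y)) \/
  (exists G, G \in drop n s /\ e = (fun k => ((true, k) \in G : nat)) /\ p = prodL G).
exists Fam; split.
  by move=> e p [[]//|[G [_ [-> ->]]]]; apply: prodL_homog.
have ss := sort_sorted to (enum [pred P : {set rootidx I} | flatb P]).
rewrite -/s -(cat_take_drop n s) in ss.
have ud : forall G, G \in take n s -> G \in drop n s -> False.
  move=> G h1 h2; move: us; rewrite -(cat_take_drop n s) cat_uniq => /and3P[_ /hasPn h _].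
  by move: (h G h2); rewrite h1.
move=> x; split.
  case=> Psi [Pt cP] e p [[hp van]|[G [Gd [he hp]]]]; last subst e p.
    have fP : flat pos Psi by apply/flatbP; rewrite -ms (mem_take Pt).
    exact: (cell_in_hbar fP cP hp van).
  rewrite /vanish prodL_eval; apply/eqP; rewrite prodf_seq_eq0.
  apply: contraT; rewrite -all_predC => /allP hall.
  have fP : flat pos Psi by apply/flatbP; rewrite -ms (mem_take Pt).
  have fG : flat pos G by apply/flatbP; rewrite -ms (mem_drop Gd).
  have hPsi := cring_psix fP cP.
  have sub : G \subset Psi.
    apply/subsetP => [[b i]] jG; rewrite hPsi inE /=.
    have iG : (true, i) \in G by case: b jG => //; rewrite (flat_sym (true, i) fG).
    by have := hall i (mem_index_enum i); rewrite /= iG /=; case: (x i) => //=; rewrite eqxx.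
  have l1 : le Psi G := sorted_cat_rel tr ss Pt Gd.
  have hrk : rk pos G = rk pos Psi.
    apply/anti_leq/andP; split; last exact: l1.
    by rewrite !rkE; exact: mxrankS (span_mono pos sub).
  have eq := flat_eq fG fP sub hrk.
  by case: (ud Psi); rewrite // -eq.
move=> hall.
have hx : hbar pos x by move=> e p hp van; apply: (hall e p); left; split.
have fP := hbar_flat hx; have cP := hbar_cring hx.
exists (psix x); split => //.
have : psix x \in take n s ++ drop n s by rewrite cat_take_drop ms; apply/flatbP.
rewrite mem_cat => /orP[//|Gd].
have := hall _ _ (or_intror (ex_intro _ (psix x) (conj Gd (conj erefl erefl)))).
rewrite /vanish prodL_eval big1 => [/eqP|i]; first by rewrite oner_eq0.
by rewrite inE /=; case: (x i).
Qed.

End Paving.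

Unset Implicit Arguments. Set Strict Implicit. Set Printing Implicit Defensive.

Theorem mainTheorem6 (C : numClosedFieldType) (r : nat) (I : finType)
  (pos cor : I -> 'rV[C]_r)
  (Hroot : is_root_system pos cor) (Hpos : is_positive_system pos) :
  (* the translation action of h extends to an action on \bar h *)
  [/\ ((forall y x, hbar pos x -> hbar pos (act pos y x))
      /\ (forall y h, act pos y (emb pos h) = emb pos (h + y))
      /\ (forall x, act pos 0 x = x)
      /\ (forall y z x, act pos (y + z) x = act pos y (act pos z x))),
    (* \bar h is the union of the \mathring C(Psi), Psi k-step good, 0 <= k <= r *)
    (forall x, hbar pos x <->
       exists k, (k <= r)%N /\ exists Psi, kstep_good pos cor k Psi /\ Cring pos Psi x),
    (* ... and the union is disjoint *)
    (forall k1 k2 Psi1 Psi2 x, kstep_good pos cor k1 Psi1 -> kstep_good pos cor k2 Psi2 ->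
       Cring pos Psi1 x -> Cring pos Psi2 x -> k1 = k2 /\ Psi1 = Psi2)
  & (* each \mathring C(Psi) is a (nonempty) h-orbit, hence these are exactly the orbits *)
    (forall k Psi, kstep_good pos cor k Psi ->
       (exists x, Cring pos Psi x) /\
       forall x, Cring pos Psi x -> forall z, Cring pos Psi z <-> exists y, z = act pos y x)] /\
  [/\
    (* \mathring C(Phi) = h, and it is open in \bar h *)
    ((forall x, Cring pos setT x <-> exists h, x = emb pos h) /\
     exists A, zclosed A /\ forall x, hbar pos x -> (Cring pos setT x <-> ~ A x)),
    (* \mathring C(Psi) is isomorphic to an affine space of dimension rk Psi = r - k *)
    (forall k Psi, kstep_good pos cor k Psi ->
       rk pos Psi = (r - k)%N /\ affine_iso (Cring pos Psi) (rk pos Psi))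
  & (* affine paving: an ordering of the cells whose initial unions are closed *)
    exists s : seq {set rootidx I},
      [/\ uniq s,
          (forall Psi, Psi \in s <-> exists k, kstep_good pos cor k Psi) &
          forall n, zclosed (fun x => exists Psi, Psi \in take n s /\ Cring pos Psi x)]].
Proof.
have Hrank : \rank (\sum_(j : rootidx I) <<Defs.root pos j>>)%MS = r by case: Hroot => _ _ _ _ [].
have act_cring Psi x y : Cring pos Psi x -> Cring pos Psi (act pos y x).
  case=> xN [h xS]; split => [i /xN|]; first by rewrite /act => ->.
  by exists (h + y) => i /xS; rewrite /act => -> /=; rewrite pairingDr.
have hbarE x : hbar pos x <-> exists k, (k <= r)%N /\
    exists Psi, kstep_good pos cor k Psi /\ Cring pos Psi x.
  split.
  - move=> hx; exists (r - rk pos (psix x))%N; split; first exact: leq_subr.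
    exists (psix x); split; [exact: flat_kstep (hbar_flat hx) | exact: hbar_cring].
  - case=> k [_ [Psi [kP cP]]]; have [fP _] := kstep_flat Hrank kP.
    exact: cell_in_hbar fP cP.
split; split.
- split; [|split; [|split]].
  + move=> y x /hbarE [k [kr [Psi [kP cP]]]]; apply/hbarE; exists k; split=> //.
    by exists Psi; split=> //; apply: act_cring.
  + move=> y h; apply: functional_extensionality => i.
    by rewrite /act /emb /= pairingDr.
  + move=> x; apply: functional_extensionality => i.
    by rewrite /act; case: (x i) => //= c; rewrite pairing0r addr0.
  + move=> y z x; apply: functional_extensionality => i.
    by rewrite /act; case: (x i) => //= c; rewrite pairingDr addrA addrAC.
- exact: hbarE.
- move=> k1 k2 P1 P2 x h1 h2 c1 c2.
  have [f1 e1] := kstep_flat Hrank h1; have [f2 e2] := kstep_flat Hrank h2.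
  have eP : P1 = P2 by rewrite (cring_psix f1 c1) (cring_psix f2 c2).
  split=> //; subst P1; apply/eqP; rewrite -(eqn_add2l (rk pos P2)) e1 e2 //.
- move=> k Psi kP; have [fP _] := kstep_flat Hrank kP; split.
    exists (fun i => if (true, i) \in Psi then Some (pairing (pos i) 0) else None).
    by split => [i /negbTE -> //|]; exists 0 => i ->.
  move=> x cx z; split; last by case=> y ->; apply: act_cring.
  case=> zN [h' zS]; case: cx => xN [h xS]; exists (h' - h).
  apply: functional_extensionality => i; rewrite /act.
  case: (boolP ((true, i) \in Psi)) => iP; last by rewrite xN // zN.
  by rewrite xS // zS //= pairingBr addrC subrK.
- split.
    move=> x; split.
      by case=> _ [h xS]; exists h; apply: functional_extensionality => i; rewrite /emb xS // in_setT.
    by case=> h ->; split=> [i|]; [rewrite in_setT | exists h].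
  exists (fun x => vanish (prodL C setT) x); split.
    exists (fun e p => e = (fun k => ((true, k) \in [set: rootidx I] : nat)) /\ p = prodL C setT).
    split; first by move=> e p [-> ->]; apply: prodL_homog.
    by move=> x; split => [hv e p [_ ->] //| h]; apply: h; split.
  move=> x hx; rewrite /vanish prodL_eval; split.
    case=> xN [h xS]; rewrite big1 => [/eqP|i _]; first by rewrite oner_eq0.
    by rewrite xS ?in_setT.
  move=> hn; have -> : [set: rootidx I] = psix x.
    apply/setP => j; rewrite !inE; apply/esym; apply: contraT; rewrite negbK => /eqP xj.
    by case: hn; rewrite (bigD1 j.2) ?in_setT //= xj mul0r.
  exact: hbar_cring.
- move=> k Psi kP; have [fP e] := kstep_flat Hrank kP; split; first by apply/eqP; rewrite -(eqn_add2r k) subnK -?e ?leq_addl // e.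
  exact: affine_flat.
- exact: paving Hrank.
Qed.
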